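(* Under the standing setup (with $f$ possibly unbounded), let $t\ge0$ and let $(\pi_n)_{n\in\mathbb N}\subset P_t$ satisfy $\pi_n\subset\pi_{n+1}$ for all $n$ and $|\pi_n|_\infty\searrow0$ as $n\to\infty$. Then for all $u_0\in\mathbb R^d$, $\mathcal E_{\pi_n}u_0\nearrow\mathscr S(t)u_0$ as $n\to\infty$.
   Context: Standing setup: $d\in\mathbb N$; vectors in $\mathbb R^d$ with $\|u\|_\infty=\max_i|u_i|$; inequalities and suprema of vectors are componentwise; reals are identified with constant vectors. A $Q$-matrix is $q\in\mathbb R^{d\times d}$ with $q_{ii}\le0$, $q_{ij}\ge0$ ($i\ne j$), $\sum_jq_{ij}=0$. Let $\mathcal P$ be a set of $Q$-matrices and $f=(f_q)_{q\in\mathcal P}\subset\mathbb R^d$ with $\sup_{q\in\mathcal P}f_q=f_{q_0}=0$ for some $q_0\in\mathcal P$, such that $\mathcal Qu:=\sup_{q\in\mathcal P}(qu+f_q)$ is finite for every $u\in\mathbb R^d$. For $q\in\mathcal P$, $t\ge0$: $S_q(t)u_0:=e^{tq}u_0+\int_0^te^{sq}f_q\,ds$. For $h\ge0$: $\mathcal E_hu_0:=\sup_{q\in\mathcal P}S_q(h)u_0$. $P$ is the set of finite subsets $\pi\subset[0,\infty)$ with $0\in\pi$; $P_t:=\{\pi\in P:\max\pi=t\}$. For $\pi=\{t_0,\dots,t_m\}$ with $0=t_0<\dots<t_m$, $m\ge1$, $\mathcal E_\pi:=\mathcal E_{t_1-t_0}\circ\cdots\circ\mathcal E_{t_m-t_{m-1}}$,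 and $\mathcal E_{\{0\}}:=\mathcal E_0$; the mesh size is $|\pi|_\infty:=\max_j(t_j-t_{j-1})$, $|\{0\}|_\infty:=0$. The Nisio semigroup of $(\mathcal P,f)$ is $\mathscr S(t)u_0:=\sup_{\pi\in P_t}\mathcal E_\pi u_0$. *)

(* Defs.v *)
From Stdlib Require Import Reals List ClassicalEpsilon Factorial Sorted.
Import ListNotations.
Open Scope R_scope.

(* Vectors in R^d: functions nat -> R, only indices i < d matter.
   Matrices in R^{d x d}: functions nat -> nat -> R. *)
Definition vec := nat -> R.
Definition mat := nat -> nat -> R.

Fixpoint sumR (n : nat) (g : nat -> R) : R :=
  match n with O => 0 | S m => sumR m g + g m end.

Definition mv (d : nat) (q : mat) (u : vec) : vec :=
  fun i => sumR d (fun j => q i j * u j).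

Fixpoint mpow (d : nat) (q : mat) (k : nat) (u : vec) : vec :=
  match k with O => u | S k' => mv d q (mpow d q k' u) end.

Definition is_Qmatrix (d : nat) (q : mat) : Prop :=
  (forall i, (i < d)%nat -> q i i <= 0) /\
  (forall i j, (i < d)%nat -> (j < d)%nat -> i <> j -> 0 <= q i j) /\
  (forall i, (i < d)%nat -> sumR d (fun j => q i j) = 0).

Definition Rlim (u : nat -> R) : R :=
  epsilon (inhabits 0) (fun l => Un_cv u l).

Definition Rsup (E : R -> Prop) : R :=
  epsilon (inhabits 0) (fun l => is_lub E l).

Definition Rint (g : R -> R) (a b : R) : R :=
  epsilon (inhabits 0)
    (fun I => exists pr : Riemann_integrable g a b, RiemannInt pr = I).

Definition expm (d : nat) (q : mat) (t : R) (u : vec) : vec :=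
  fun i => Rlim (fun N => sum_f_R0 (fun k => t ^ k / INR (fact k) * mpow d q k u i) N).

Definition Sq (d : nat) (q : mat) (fq : vec) (t : R) (u0 : vec) : vec :=
  fun i => expm d q t u0 i + Rint (fun s => expm d q s fq i) 0 t.

Definition vsup {A : Type} (F : A -> Prop) (v : A -> vec) : vec :=
  fun i => Rsup (fun x => exists a, F a /\ x = v a i).

Definition Eh (d : nat) (P : mat -> Prop) (f : mat -> vec) (h : R) (u0 : vec) : vec :=
  vsup P (fun q => Sq d q (f q) h u0).

(* Partitions: a finite subset {t_0 < ... < t_m} of [0,oo) containing 0 is
   represented by the strictly increasing list [t_0; ...; t_m] with t_0 = 0. *)
Definition is_partition (l : list R) : Prop :=
  hd 1 l = 0 /\ StronglySorted Rlt l.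

Definition is_partition_t (t : R) (l : list R) : Prop :=
  is_partition l /\ last l 0 = t.

Fixpoint Epi_aux (d : nat) (P : mat -> Prop) (f : mat -> vec)
  (prev : R) (rest : list R) (u : vec) : vec :=
  match rest with
  | [] => u
  | x :: r => Eh d P f (x - prev) (Epi_aux d P f x r u)
  end.

Definition Epi (d : nat) (P : mat -> Prop) (f : mat -> vec) (l : list R) (u : vec) : vec :=
  match l with
  | [] => u
  | [t0] => Eh d P f 0 u
  | t0 :: rest => Epi_aux d P f t0 rest u
  end.

Fixpoint mesh_aux (prev : R) (rest : list R) : R :=
  match rest with
  | [] => 0
  | x :: r => Rmax (x - prev) (mesh_aux x r)
  end.

Definition mesh (l : list R) : R :=
  match l with [] => 0 | t0 :: rest => mesh_aux t0 rest end.

Definition Nisio (d : nat) (P : mat -> Prop) (f : mat -> vec) (t : R) (u0 : vec) : vec :=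
  vsup (is_partition_t t) (fun l => Epi d P f l u0).

(* Main.v *)
Require Import Defs.
From Stdlib Require Import Reals List.
From Coquelicot Require Import Coquelicot.
From Stdlib Require Import Lia Psatz Lra Classical ClassicalEpsilon Factorial FunctionalExtensionality Sorted.
Import ListNotations.
Open Scope R_scope.

Lemma sumR_ext n g h : (forall j, (j < n)%nat -> g j = h j) -> sumR n g = sumR n h.
Proof. induction n; simpl; intros H; auto. rewrite IHn by (intros; apply H; lia). rewrite H by lia. auto. Qed.

Lemma sumR_plus n g h : sumR n (fun j => g j + h j) = sumR n g + sumR n h.
Proof. induction n; simpl; [lra|]. rewrite IHn; lra. Qed.

Lemma sumR_minus n g h : sumR n (fun j => g j - h j) = sumR n g - sumR n h.
Proof. induction n; simpl; [lra|]. rewrite IHn; lra. Qed.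

Lemma sumR_scal n c g : sumR n (fun j => c * g j) = c * sumR n g.
Proof. induction n; simpl; [lra|]. rewrite IHn; lra. Qed.

Lemma sumR_const n c : sumR n (fun _ => c) = INR n * c.
Proof. induction n; simpl sumR; [simpl; lra|]. rewrite IHn, S_INR; lra. Qed.

Lemma sumR_zero n g : (forall j, (j < n)%nat -> g j = 0) -> sumR n g = 0.
Proof. intros H. rewrite (sumR_ext n g (fun _ => 0)) by auto. rewrite sumR_const; lra. Qed.

Lemma sumR_le n g h : (forall j, (j < n)%nat -> g j <= h j) -> sumR n g <= sumR n h.
Proof. induction n; simpl; intros H; [lra|]. pose proof (H n ltac:(lia)).
  assert (sumR n g <= sumR n h) by (apply IHn; intros; apply H; lia). lra. Qed.

Lemma sumR_nonneg n g : (forall j, (j < n)%nat -> 0 <= g j) -> 0 <= sumR n g.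
Proof. intros H. replace 0 with (sumR n (fun _ => 0)) by (rewrite sumR_const; lra). apply sumR_le; auto. Qed.

Lemma sumR_abs n g : Rabs (sumR n g) <= sumR n (fun j => Rabs (g j)).
Proof. induction n; simpl. rewrite Rabs_R0; lra.
  eapply Rle_trans. apply Rabs_triang. lra. Qed.

Lemma sumR_term n g j : (forall k, (k < n)%nat -> 0 <= g k) -> (j < n)%nat -> g j <= sumR n g.
Proof. induction n; intros H Hj; [lia|]. simpl.
  destruct (Nat.eq_dec j n). subst. pose proof (sumR_nonneg n g ltac:(intros; apply H; lia)). lra.
  pose proof (IHn ltac:(intros; apply H; lia) ltac:(lia)). pose proof (H n ltac:(lia)). lra. Qed.

Lemma sumR_swap n m (g : nat -> nat -> R) :
  sumR n (fun i => sumR m (fun j => g i j)) = sumR m (fun j => sumR n (fun i => g i j)).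
Proof. induction n; simpl. rewrite sumR_zero; auto.
  rewrite IHn. rewrite <- sumR_plus. auto. Qed.

Lemma sumR_delta d i c (y : nat -> R) : (i < d)%nat ->
  sumR d (fun j => (if Nat.eq_dec i j then c else 0) * y j) = c * y i.
Proof. induction d; intros H; [lia|]. simpl.
  destruct (Nat.eq_dec i d).
  - subst. rewrite sumR_zero. lra. intros j Hj. destruct (Nat.eq_dec d j); [lia|lra].
  - rewrite IHd by lia. lra. Qed.

Lemma is_derive_sumR n (g : nat -> R -> R) (dg : nat -> R) x :
  (forall j, (j < n)%nat -> is_derive (g j) x (dg j)) ->
  is_derive (fun s => sumR n (fun j => g j s)) x (sumR n dg).
Proof. induction n; simpl; intros H.
  - exact (@is_derive_const R_AbsRing R_NormedModule 0 x).
  - apply (is_derive_plus (fun s => sumR n (fun j => g j s)) (g n)).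
    apply IHn; intros; apply H; lia. apply H; lia. Qed.

Lemma mat_bound d (A : mat) : exists M, 0 <= M /\ forall i j, (i < d)%nat -> (j < d)%nat -> Rabs (A i j) <= M.
Proof. exists (sumR d (fun i => sumR d (fun j => Rabs (A i j)))). split.
  apply sumR_nonneg; intros; apply sumR_nonneg; intros; apply Rabs_pos.
  intros i j Hi Hj. eapply Rle_trans; [|apply (sumR_term d (fun i => sumR d (fun j => Rabs (A i j))) i)]; auto.
  apply (sumR_term d (fun j => Rabs (A i j))); auto. intros; apply Rabs_pos.
  intros; apply sumR_nonneg; intros; apply Rabs_pos. Qed.

Lemma vec_bound d (w : vec) : exists W, 0 <= W /\ forall j, (j < d)%nat -> Rabs (w j) <= W.
Proof. destruct (mat_bound d (fun _ j => w j)) as [M [HM H]]. exists M; split; auto.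
  intros j Hj. destruct d; [lia|]. apply (H 0%nat j); lia. Qed.

Lemma mpow_bound d A w M W : 0 <= M -> 0 <= W ->
  (forall i j, (i < d)%nat -> (j < d)%nat -> Rabs (A i j) <= M) ->
  (forall j, (j < d)%nat -> Rabs (w j) <= W) ->
  forall k i, (i < d)%nat -> Rabs (mpow d A k w i) <= W * (INR d * M) ^ k.
Proof. intros HM HW HA Hw k. induction k; intros i Hi; simpl. rewrite Rmult_1_r; auto.
  unfold mv. eapply Rle_trans. apply sumR_abs.
  eapply Rle_trans. apply (sumR_le _ _ (fun _ => M * (W * (INR d * M)^k))).
  intros j Hj. rewrite Rabs_mult. apply Rmult_le_compat; auto using Rabs_pos.
  rewrite sumR_const. lra. Qed.

Definition coef d A w i := fun k => mpow d A k w i / INR (fact k).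
Definition EE d A w s i := PSeries (coef d A w i) s.

Lemma Rabs_norm (x : R) : norm x = Rabs x.
Proof. reflexivity. Qed.

Lemma coef_disk d A w i x : (i < d)%nat -> CV_disk (coef d A w i) x.
Proof. intros Hi.
  destruct (mat_bound d A) as [M [HM HA]]. destruct (vec_bound d w) as [W [HW Hw]].
  unfold CV_disk.
  apply (@ex_series_le R_AbsRing R_CompleteNormedModule _ (fun n => W * ((INR d * M * Rabs x) ^ n / INR (fact n)))).
  - intros n. rewrite Rabs_norm, Rabs_Rabsolu. unfold coef.
    rewrite !Rabs_mult. unfold Rdiv. rewrite Rabs_mult, Rabs_inv, <- RPow_abs.
    rewrite (Rabs_pos_eq (INR (fact n))) by apply pos_INR.
    rewrite Rpow_mult_distr.
    pose proof (mpow_bound d A w M W HM HW HA Hw n i Hi).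
    assert (0 < / INR (fact n)) by (apply Rinv_0_lt_compat, lt_0_INR, lt_O_fact).
    assert (0 <= Rabs x ^ n) by (apply pow_le, Rabs_pos).
    unfold Rdiv. rewrite Rmult_assoc.
    replace (W * ((INR d * M) ^ n * Rabs x ^ n * / INR (fact n))) with
      (W * (INR d * M) ^ n * (/ INR (fact n) * Rabs x ^ n)) by ring.
    apply Rmult_le_compat_r; auto. apply Rmult_le_pos; lra.
  - apply (ex_series_scal W (fun n => (INR d * M * Rabs x) ^ n / INR (fact n))).
    pose proof (is_exp_Reals (INR d * M * Rabs x)) as Hl. eexists.
    eapply is_series_ext; [|apply Hl]. intros n. simpl. rewrite pow_n_pow.
    unfold scal; simpl; unfold mult; simpl. unfold Rdiv; ring.
Qed.

Lemma coef_radius d A w i x : (i < d)%nat -> Rbar_lt (Rabs x) (CV_radius (coef d A w i)).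
Proof. intros Hi. destruct (Lub_Rbar_correct (CV_disk (coef d A w i))) as [Hub _].
  pose proof (Hub (Rabs x + 1) (coef_disk d A w i (Rabs x + 1) Hi)).
  unfold CV_radius. destruct (Lub_Rbar (CV_disk (coef d A w i))); simpl in *; auto; lra. Qed.

Lemma coef_ex d A w i x : (i < d)%nat -> ex_pseries (coef d A w i) x.
Proof. intros; apply CV_radius_inside, coef_radius; auto. Qed.

Lemma PSeries_sumR n (c : nat -> nat -> R) x :
  (forall j, (j < n)%nat -> ex_pseries (c j) x) ->
  ex_pseries (fun k => sumR n (fun j => c j k)) x /\
  PSeries (fun k => sumR n (fun j => c j k)) x = sumR n (fun j => PSeries (c j) x).
Proof. induction n; intros H; simpl.
  - split. apply CV_radius_inside; rewrite CV_radius_const_0; simpl; auto. apply PSeries_const_0.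
  - destruct IHn as [Hex Heq]. intros; apply H; lia.
    assert (Hn : ex_pseries (c n) x) by (apply H; lia).
    split.
    + apply ex_pseries_ext with (PS_plus (fun k => sumR n (fun j => c j k)) (c n)).
      intros k; reflexivity. apply ex_pseries_plus; auto.
    + rewrite <- Heq. rewrite <- PSeries_plus by auto. apply PSeries_ext. intros; reflexivity.
Qed.

Lemma EE_derive d A w s i : (i < d)%nat ->
  is_derive (fun s => EE d A w s i) s (sumR d (fun j => A i j * EE d A w s j)).
Proof. intros Hi. unfold EE.
  replace (sumR d (fun j => A i j * PSeries (coef d A w j) s)) with (PSeries (PS_derive (coef d A w i)) s).
  apply is_derive_PSeries, coef_radius; auto.
  rewrite PSeries_ext with (b := fun k => sumR d (fun j => A i j * coef d A w j k)).
  - assert (Hx : forall j, (j < d)%nat -> ex_pseries (fun k => A i j * coef d A w j k) s).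
    { intros j Hj. apply ex_pseries_ext with (PS_scal (A i j) (coef d A w j)). intros; reflexivity.
      apply ex_pseries_scal; [unfold mult; simpl; ring| apply coef_ex; auto]. }
    rewrite (proj2 (PSeries_sumR d (fun j k => A i j * coef d A w j k) s Hx)).
    apply sumR_ext. intros j Hj. apply (PSeries_scal (A i j) (coef d A w j)).
  - intros n. unfold PS_derive, coef. simpl mpow. unfold mv.
    unfold Rdiv. transitivity (/ INR (fact n) * sumR d (fun j => A i j * mpow d A n w j)).
    rewrite fact_simpl, mult_INR. field. split. apply INR_fact_neq_0. apply not_0_INR; lia.
    rewrite <- sumR_scal. apply sumR_ext; intros; ring.
Qed.

Lemma EE_0 d A w i : EE d A w 0 i = w i.
Proof. unfold EE. rewrite PSeries_0. unfold coef. simpl. lra. Qed.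

Lemma D_plus (f g : R -> R) x a b : is_derive f x a -> is_derive g x b -> is_derive (fun s => f s + g s) x (a + b).
Proof. intros; apply (is_derive_plus f g); auto. Qed.
Lemma D_minus (f g : R -> R) x a b : is_derive f x a -> is_derive g x b -> is_derive (fun s => f s - g s) x (a - b).
Proof. intros; apply (is_derive_minus f g); auto. Qed.
Lemma D_mult (f g : R -> R) x a b : is_derive f x a -> is_derive g x b -> is_derive (fun s => f s * g s) x (a * g x + f x * b).
Proof. intros; apply (is_derive_mult f g); auto. intros; apply Rmult_comm. Qed.
Lemma D_scal (f : R -> R) c x a : is_derive f x a -> is_derive (fun s => c * f s) x (c * a).
Proof. intros; apply (is_derive_scal f); auto. Qed.
Lemma D_const (c x : R) : is_derive (fun _ => c) x 0.
Proof. exact (@is_derive_const R_AbsRing R_NormedModule c x). Qed.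
Lemma D_id (x : R) : is_derive (fun s => s) x 1.
Proof. exact (@is_derive_id R_AbsRing x). Qed.
Lemma D_val (f : R -> R) x l l' : is_derive f x l -> l = l' -> is_derive f x l'.
Proof. intros H ->; auto. Qed.
Lemma D_ext (f g : R -> R) x l : (forall t, f t = g t) -> is_derive f x l -> is_derive g x l.
Proof. intros; eapply (is_derive_ext f g); eauto. Qed.
Lemma D_shift (f : R -> R) h x l : is_derive f (x + h) l -> is_derive (fun s => f (s + h)) x l.
Proof. intros H. apply D_val with (scal 1 l).
  apply (is_derive_comp f (fun s => s + h)). exact H.
  apply D_val with (1 + 0). apply D_plus. apply D_id. apply D_const.
  all: try (unfold scal; simpl; unfold mult; simpl; ring). Qed.
Lemma D_expK (K x : R) : is_derive (fun s => exp (- (K * s))) x (exp (- (K * x)) * - K).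
Proof. auto_derive. auto. ring. Qed.
Lemma D_cont (f : R -> R) x l : is_derive f x l -> continuity_pt f x.
Proof. intros H. apply continuity_pt_filterlim. apply (ex_derive_continuous f). exists l; auto. Qed.

Lemma two_ab_le B M a b : Rabs B <= M -> 2 * B * a * b <= M * (a * a + b * b).
Proof. intros H. assert (-M <= B <= M) by (pose proof (Rle_abs B); pose proof (Rle_abs (-B)); rewrite Rabs_Ropp in *; lra).
  pose proof (Rle_0_sqr (a - b)). pose proof (Rle_0_sqr (a + b)). unfold Rsqr in *.
  destruct (Rle_lt_dec 0 B).
  - assert (0 <= (M - B) * (a * a + b * b)) by (apply Rmult_le_pos; nra). nra.
  - assert (0 <= (M + B) * (a * a + b * b)) by (apply Rmult_le_pos; nra). nra. Qed.

Lemma ode_unique d (B : mat) (Y : nat -> R -> R) :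
  (forall i s, (i < d)%nat -> is_derive (Y i) s (sumR d (fun j => B i j * Y j s))) ->
  (forall i, (i < d)%nat -> Y i 0 = 0) ->
  forall s, 0 <= s -> forall i, (i < d)%nat -> Y i s = 0.
Proof.
  intros HD H0 s Hs.
  destruct (mat_bound d B) as [M [HM HB]].
  set (K := 2 * INR d * M).
  set (V := fun s => sumR d (fun i => Y i s * Y i s)).
  set (dV := fun s => sumR d (fun i => 2 * Y i s * sumR d (fun j => B i j * Y j s))).
  assert (HVd : forall x : R, is_derive V x (dV x)).
  { intros x. unfold V, dV. apply is_derive_sumR. intros j Hj.
    apply D_val with (sumR d (fun k => B j k * Y k x) * Y j x + Y j x * sumR d (fun k => B j k * Y k x)).
    apply D_mult; apply HD; auto. match goal with |- ?a = ?b => change (@eq R a b) end; ring. }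
  assert (HKV : forall x, dV x <= K * V x).
  { intros x. unfold dV, V, K.
    eapply Rle_trans. apply (sumR_le _ _ (fun i => sumR d (fun j => M * (Y i x * Y i x + Y j x * Y j x)))).
    intros i Hi. rewrite <- sumR_scal. apply sumR_le. intros j Hj.
    replace (2 * Y i x * (B i j * Y j x)) with (2 * B i j * Y i x * Y j x) by ring.
    apply two_ab_le; auto.
    rewrite (sumR_ext d _ (fun i => sumR d (fun j => M * (Y i x * Y i x)) + sumR d (fun j => M * (Y j x * Y j x)))).
    rewrite sumR_plus. rewrite (sumR_ext d (fun i => sumR d (fun j => M * (Y i x * Y i x))) (fun i => INR d * M * (Y i x * Y i x))).
    rewrite (sumR_scal d (INR d * M)). rewrite sumR_const, sumR_scal. lra.
    intros; rewrite sumR_const; ring. intros i Hi. rewrite <- sumR_plus. apply sumR_ext; intros; ring. }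
  set (W := fun s => V s * exp (- (K * s))).
  set (dW := fun s => dV s * exp (- (K * s)) + V s * (exp (- (K * s)) * - K)).
  assert (HWd : forall x : R, is_derive W x (dW x)).
  { intros x. apply (D_mult V (fun s => exp (-(K*s)))). apply HVd. apply D_expK. }
  assert (HdW : forall x, dW x <= 0).
  { intros x. unfold dW. pose proof (HKV x). pose proof (exp_pos (- (K * x))). nra. }
  assert (HW0 : W 0 = 0).
  { unfold W, V. rewrite sumR_zero. ring. intros i Hi. rewrite H0; auto; ring. }
  assert (HWs : W s <= 0).
  { destruct (MVT_gen W 0 s dW) as [c [_ Hc]].
    intros; apply HWd. intros; eapply D_cont, HWd.
    rewrite HW0 in Hc. pose proof (HdW c). nra. }
  assert (HVs : V s <= 0).
  { unfold W in HWs. pose proof (exp_pos (- (K * s))). nra. }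
  intros i Hi.
  assert (Y i s * Y i s <= V s).
  { apply (sumR_term d (fun i => Y i s * Y i s)); auto. intros; nra. }
  nra.
Qed.

Ltac Req := match goal with |- ?a = ?b => change (@eq R a b) end.

Definition Ehom d (B : mat) (Y : nat -> R -> R) :=
  forall i (s : R), (i < d)%nat -> is_derive (Y i) s (sumR d (fun j => B i j * Y j s)).

Lemma EE_hom d A w : Ehom d A (fun i s => EE d A w s i).
Proof. intros i s Hi. apply EE_derive; auto. Qed.

Lemma hom_lin d B Y1 Y2 a b : Ehom d B Y1 -> Ehom d B Y2 ->
  Ehom d B (fun i s => a * Y1 i s + b * Y2 i s).
Proof. intros H1 H2 i s Hi. eapply D_val. apply D_plus; apply D_scal; [apply H1|apply H2]; auto.
  Req. rewrite <- !sumR_scal, <- sumR_plus. apply sumR_ext; intros; ring. Qed.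

Lemma hom_const d q c : is_Qmatrix d q -> Ehom d q (fun _ _ => c).
Proof. intros [_ [_ Hs]] i s Hi. eapply D_val. apply D_const.
  rewrite (sumR_ext _ _ (fun j => c * q i j)) by (intros; ring). rewrite sumR_scal, Hs; auto; Req; ring. Qed.

Lemma hom_shift d B Y h : Ehom d B Y -> Ehom d B (fun i s => Y i (s + h)).
Proof. intros H i s Hi. apply (D_shift (Y i) h s). apply H; auto. Qed.

Lemma hom_uniq d B Y1 Y2 : Ehom d B Y1 -> Ehom d B Y2 ->
  (forall i, (i < d)%nat -> Y1 i 0 = Y2 i 0) ->
  forall s, 0 <= s -> forall i, (i < d)%nat -> Y1 i s = Y2 i s.
Proof. intros H1 H2 H0 s Hs i Hi.
  assert (Y1 i s + -1 * Y2 i s = 0).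
  { apply (ode_unique d B (fun i s => 1 * Y1 i s + -1 * Y2 i s)) with (i := i) (s := s) in Hs; auto.
    lra. apply hom_lin; auto. intros; rewrite H0; auto; ring. }
  lra. Qed.

Lemma Series_nonneg (a : nat -> R) : (forall n, 0 <= a n) -> ex_series a -> 0 <= Series a.
Proof. intros Ha He. rewrite <- (PSeries_const_0 0). unfold PSeries. apply Series_le; auto.
  intros n; simpl. rewrite Rmult_0_l. split; [lra| apply Ha]. Qed.

Lemma EE_nonneg_pos d A v s i : (forall i j, (i < d)%nat -> (j < d)%nat -> 0 <= A i j) ->
  (forall j, (j < d)%nat -> 0 <= v j) -> 0 <= s -> (i < d)%nat -> 0 <= EE d A v s i.
Proof. intros HA Hv Hs Hi.
  assert (Hm : forall k i, (i < d)%nat -> 0 <= mpow d A k v i).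
  { induction k; intros i' Hi'; simpl; auto. unfold mv. apply sumR_nonneg. intros j Hj.
    apply Rmult_le_pos; auto. }
  unfold EE, PSeries. apply Series_nonneg.
  intros n. unfold coef. apply Rmult_le_pos. apply Rmult_le_pos; auto.
  apply Rlt_le, Rinv_0_lt_compat, lt_0_INR, lt_O_fact. apply pow_le; auto.
  destruct (coef_ex d A v i s Hi) as [l Hl]. exists l.
  eapply is_series_ext; [|apply Hl]. intros n. simpl. rewrite pow_n_pow.
  unfold scal; simpl; unfold mult; simpl; ring. Qed.

Lemma EE_pos d q v s i : is_Qmatrix d q -> (forall j, (j < d)%nat -> 0 <= v j) -> 0 <= s -> (i < d)%nat ->
  0 <= EE d q v s i.
Proof. intros HQ Hv Hs Hi.
  destruct (mat_bound d q) as [M [HM Hq]].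
  set (A := fun i j => q i j + (if Nat.eq_dec i j then M else 0)).
  assert (HA : forall i j, (i < d)%nat -> (j < d)%nat -> 0 <= A i j).
  { intros i' j Hi' Hj. unfold A. destruct (Nat.eq_dec i' j).
    pose proof (Hq i' j Hi' Hj). pose proof (Rle_abs (- q i' j)). rewrite Rabs_Ropp in *. lra.
    destruct HQ as [_ [H2 _]]. pose proof (H2 i' j Hi' Hj n). lra. }
  set (Y := fun i s => exp (- (M * s)) * EE d A v s i).
  assert (HY : Ehom d q Y).
  { intros i' s' Hi'. unfold Y. eapply D_val.
    apply (D_mult (fun s => exp (- (M * s))) (fun s => EE d A v s i')). apply D_expK. apply EE_derive; auto.
    Req. transitivity (exp (- (M * s')) * (sumR d (fun j => A i' j * EE d A v s' j) - M * EE d A v s' i')). ring.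
    rewrite (sumR_ext _ (fun j => A i' j * EE d A v s' j) (fun j => q i' j * EE d A v s' j + (if Nat.eq_dec i' j then M else 0) * EE d A v s' j)) by (intros; unfold A; ring).
    rewrite sumR_plus, sumR_delta by auto. transitivity (exp (- (M * s')) * sumR d (fun j => q i' j * EE d A v s' j)). Req; ring.
        rewrite <- sumR_scal. apply sumR_ext; intros; unfold Y; ring. }
  rewrite (hom_uniq d q (fun i s => EE d q v s i) Y (EE_hom d q v) HY) with (s := s); auto.
  unfold Y. apply Rmult_le_pos. apply Rlt_le, exp_pos. apply EE_nonneg_pos; auto.
  intros i' Hi'. unfold Y. rewrite !EE_0. rewrite Rmult_0_r, Ropp_0, exp_0; ring. Qed.

Lemma EE_mono d q v w eps s i : is_Qmatrix d q -> (forall j, (j < d)%nat -> w j - eps <= v j) ->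
  0 <= s -> (i < d)%nat -> EE d q w s i - eps <= EE d q v s i.
Proof. intros HQ Hvw Hs Hi.
  pose proof (EE_pos d q (fun j => v j - w j + eps) s i HQ ltac:(intros j Hj; pose proof (Hvw j Hj); lra) Hs Hi).
  rewrite <- (hom_uniq d q (fun i s => 1 * (1 * EE d q v s i + -1 * EE d q w s i) + 1 * eps) (fun i s => EE d q (fun j => v j - w j + eps) s i)) with (s := s) in H; auto.
  lra. apply (hom_lin d q (fun i s => 1 * EE d q v s i + -1 * EE d q w s i) (fun _ _ => eps) 1 1).
  apply hom_lin; apply EE_hom. apply hom_const; auto. apply EE_hom.
  intros; rewrite !EE_0; ring. Qed.

Lemma EE_const d q c s i : is_Qmatrix d q -> 0 <= s -> (i < d)%nat -> EE d q (fun _ => c) s i = c.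
Proof. intros HQ Hs Hi. apply (hom_uniq d q (fun i s => EE d q (fun _ => c) s i) (fun _ _ => c)); auto.
  apply EE_hom. apply hom_const; auto. intros; apply EE_0. Qed.

Definition Gf d q f s i := PSeries (PS_Int (coef d q f i)) s.

Lemma Gf_derive d q f s i : (i < d)%nat -> is_derive (fun s => Gf d q f s i) s (EE d q f s i).
Proof. intros Hi. unfold Gf, EE. eapply D_val. apply is_derive_PSeries.
  rewrite CV_radius_Int. apply coef_radius; auto.
  apply PSeries_ext. intros n. unfold PS_derive, PS_Int. field. apply not_0_INR; lia. Qed.

Lemma Gf_0 d q f i : Gf d q f 0 i = 0.
Proof. unfold Gf. rewrite PSeries_0. reflexivity. Qed.

Lemma zero_deriv (g : R -> R) : (forall s, is_derive g s 0) -> g 0 = 0 -> forall s, g s = 0.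
Proof. intros H H0 s. destruct (MVT_gen g 0 s (fun _ => 0)) as [c [_ Hc]].
  intros; apply H. intros; eapply D_cont, H. rewrite H0 in Hc. lra. Qed.

Lemma EE_f_ident d q f s i : (i < d)%nat ->
  EE d q f s i = f i + sumR d (fun j => q i j * Gf d q f s j).
Proof. intros Hi.
  assert (EE d q f s i - f i - sumR d (fun j => q i j * Gf d q f s j) = 0); [|lra].
  apply (zero_deriv (fun s => EE d q f s i - f i - sumR d (fun j => q i j * Gf d q f s j))).
  - intros x. eapply D_val. apply D_minus. apply D_minus. apply EE_derive; auto. apply D_const.
    apply is_derive_sumR. intros j Hj. apply D_scal. apply Gf_derive; auto. Req. ring.
  - rewrite EE_0, sumR_zero. ring. intros; rewrite Gf_0; ring. Qed.

Definition SS d q f s v i := EE d q v s i + Gf d q f s i.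

Lemma SS_derive d q f v s i : (i < d)%nat ->
  is_derive (fun s => SS d q f s v i) s (sumR d (fun j => q i j * SS d q f s v j) + f i).
Proof. intros Hi. unfold SS. eapply D_val. apply D_plus. apply EE_derive; auto. apply Gf_derive; auto.
  rewrite EE_f_ident by auto. Req. rewrite (sumR_ext d (fun j => q i j * (EE d q v s j + Gf d q f s j))
    (fun j => q i j * EE d q v s j + q i j * Gf d q f s j)) by (intros; ring).
  rewrite sumR_plus. ring. Qed.

Lemma SS_0 d q f v i : SS d q f 0 v i = v i.
Proof. unfold SS. rewrite EE_0, Gf_0. ring. Qed.

Lemma SS_semigroup d q f v s h i : 0 <= s -> (i < d)%nat ->
  SS d q f (s + h) v i = SS d q f s (fun j => SS d q f h v j) i.
Proof. intros Hs Hi.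
  assert (SS d q f (s + h) v i - SS d q f s (fun j => SS d q f h v j) i = 0); [|lra].
  apply (ode_unique d q (fun i s => SS d q f (s + h) v i - SS d q f s (fun j => SS d q f h v j) i)); auto.
  - intros i' s' Hi'. eapply D_val. apply D_minus. apply (D_shift (fun s => SS d q f s v i')). apply SS_derive; auto.
    apply SS_derive; auto. Req. 
    transitivity (sumR d (fun j => q i' j * SS d q f (s' + h) v j) - sumR d (fun j => q i' j * SS d q f s' (fun j0 => SS d q f h v j0) j)). ring.
    rewrite <- sumR_minus. apply sumR_ext; intros; ring.
  - intros i' Hi'. rewrite Rplus_0_l, SS_0. ring. Qed.

Lemma SS_mono d q f v w eps s i : is_Qmatrix d q -> (forall j, (j < d)%nat -> w j - eps <= v j) ->
  0 <= s -> (i < d)%nat -> SS d q f s w i - eps <= SS d q f s v i.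
Proof. intros. unfold SS. pose proof (EE_mono d q v w eps s i H H0 H1 H2). lra. Qed.

Lemma Gf_nonpos d q f s i : is_Qmatrix d q -> (forall j, (j < d)%nat -> f j <= 0) -> 0 <= s -> (i < d)%nat ->
  Gf d q f s i <= 0.
Proof. intros HQ Hf Hs Hi.
  destruct (MVT_gen (fun s => Gf d q f s i) 0 s (fun s => EE d q f s i)) as [c [Hc Heq]].
  intros; apply Gf_derive; auto. intros; eapply D_cont, Gf_derive; auto.
  rewrite Gf_0 in Heq. rewrite Rmin_left, Rmax_right in Hc by lra.
  assert (EE d q f c i <= 0).
  { pose proof (EE_mono d q (fun _ => 0) f 0 c i HQ ltac:(intros j Hj; pose proof (Hf j Hj); lra) ltac:(lra) Hi).
    rewrite EE_const in H by (auto; lra). lra. }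
  simpl in Heq. nra. Qed.

Lemma SS_bound d q f v m s i : is_Qmatrix d q -> (forall j, (j < d)%nat -> f j <= 0) ->
  (forall j, (j < d)%nat -> v j <= m) -> 0 <= s -> (i < d)%nat -> SS d q f s v i <= m.
Proof. intros HQ Hf Hv Hs Hi. unfold SS.
  pose proof (EE_mono d q (fun _ => m) v 0 s i HQ ltac:(intros j Hj; pose proof (Hv j Hj); lra) Hs Hi).
  rewrite EE_const in H by auto. pose proof (Gf_nonpos d q f s i HQ Hf Hs Hi). lra. Qed.

Lemma SS_cont d q f v s i : (i < d)%nat -> continuity_pt (fun s => SS d q f s v i) s.
Proof. intros Hi. eapply D_cont, SS_derive; auto. Qed.

Lemma expm_EE d q s w i : (i < d)%nat -> expm d q s w i = EE d q w s i.
Proof. intros Hi. unfold expm, Rlim.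
  assert (Hc : Un_cv (fun N => sum_f_R0 (fun k => s ^ k / INR (fact k) * mpow d q k w i) N) (EE d q w s i)).
  { apply is_lim_seq_Reals. unfold EE.
    pose proof (PSeries_correct _ _ (coef_ex d q w i s Hi)) as H.
    eapply is_lim_seq_ext; [|apply H]. intros n. rewrite sum_n_Reals. apply sum_eq. intros k _.
    unfold coef. change (scal (pow_n s k) (mpow d q k w i / INR (fact k))) with (pow_n s k * (mpow d q k w i / INR (fact k))).
    rewrite pow_n_pow. field. apply INR_fact_neq_0. }
  apply (UL_sequence _ _ _ (epsilon_spec _ _ (ex_intro _ _ Hc)) Hc). Qed.

Lemma Rint_Gf d q f h i : (i < d)%nat -> Rint (fun s => expm d q s f i) 0 h = Gf d q f h i.
Proof. intros Hi.
  replace (fun s => expm d q s f i) with (fun s => EE d q f s i) by (apply functional_extensionality; intros; rewrite expm_EE; auto).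
  assert (HI : is_RInt (fun s => EE d q f s i) 0 h (Gf d q f h i)).
  { apply is_RInt_PSeries. apply coef_radius; auto. }
  assert (Hex : exists I, exists pr : Riemann_integrable (fun s => EE d q f s i) 0 h, RiemannInt pr = I).
  { exists (RiemannInt (ex_RInt_Reals_0 _ _ _ (ex_intro _ _ HI))). eexists; reflexivity. }
  unfold Rint. destruct (epsilon_spec (inhabits 0) _ Hex) as [pr Hpr]. rewrite <- Hpr.
  rewrite <- RInt_Reals. apply is_RInt_unique; auto. Qed.

Lemma Sq_SS d q fq s v i : (i < d)%nat -> Sq d q fq s v i = SS d q fq s v i.
Proof. intros Hi. unfold Sq, SS. rewrite expm_EE, Rint_Gf; auto. Qed.

Lemma Rsup_lub (E : R -> Prop) : (exists x, E x) -> bound E -> is_lub E (Rsup E).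
Proof. intros Hne Hb. unfold Rsup. apply epsilon_spec.
  destruct (completeness E Hb Hne) as [m Hm]. eauto. Qed.

Section EhSec.
End EhSec.

Lemma Eh_lub d P f h v i m : (forall q, P q -> is_Qmatrix d q) ->
  (forall q, P q -> forall j, (j < d)%nat -> f q j <= 0) -> (exists q0, P q0) ->
  0 <= h -> (i < d)%nat -> (forall j, (j < d)%nat -> v j <= m) ->
  is_lub (fun x => exists q, P q /\ x = Sq d q (f q) h v i) (Eh d P f h v i).
Proof. intros HQ Hf [q0 Hq0] Hh Hi Hv. unfold Eh, vsup. apply Rsup_lub.
  exists (Sq d q0 (f q0) h v i); eauto.
  exists m. intros x [q [Hq ->]]. rewrite Sq_SS by auto. apply SS_bound; auto. Qed.

Lemma ex_vbound d (v : vec) : exists m, forall j, (j < d)%nat -> v j <= m.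
Proof. destruct (vec_bound d v) as [W [_ HW]]. exists W. intros j Hj. pose proof (HW j Hj).
  pose proof (Rle_abs (v j)). lra. Qed.

Lemma Eh_ge d P f h v i q : (forall q, P q -> is_Qmatrix d q) ->
  (forall q, P q -> forall j, (j < d)%nat -> f q j <= 0) ->
  0 <= h -> (i < d)%nat -> P q -> SS d q (f q) h v i <= Eh d P f h v i.
Proof. intros HQ Hf Hh Hi Hq. destruct (ex_vbound d v) as [m Hm].
  destruct (Eh_lub d P f h v i m HQ Hf (ex_intro _ q Hq) Hh Hi Hm) as [Hub _].
  apply Hub. exists q. split; auto. rewrite Sq_SS; auto. Qed.

Lemma Eh_le d P f h v i M : (forall q, P q -> is_Qmatrix d q) ->
  (forall q, P q -> forall j, (j < d)%nat -> f q j <= 0) -> (exists q0, P q0) ->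
  0 <= h -> (i < d)%nat -> (forall q, P q -> SS d q (f q) h v i <= M) -> Eh d P f h v i <= M.
Proof. intros HQ Hf Hq0 Hh Hi HM. destruct (ex_vbound d v) as [m Hm].
  destruct (Eh_lub d P f h v i m HQ Hf Hq0 Hh Hi Hm) as [_ Hl].
  apply Hl. intros x [q [Hq ->]]. rewrite Sq_SS; auto. Qed.

Lemma Eh_bound d P f h v i m : (forall q, P q -> is_Qmatrix d q) ->
  (forall q, P q -> forall j, (j < d)%nat -> f q j <= 0) -> (exists q0, P q0) ->
  0 <= h -> (i < d)%nat -> (forall j, (j < d)%nat -> v j <= m) -> Eh d P f h v i <= m.
Proof. intros HQ Hf Hq0 Hh Hi Hm. apply Eh_le; auto. intros q Hq. apply SS_bound; auto. Qed.

Lemma Eh_mono d P f h v w eps i : (forall q, P q -> is_Qmatrix d q) ->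
  (forall q, P q -> forall j, (j < d)%nat -> f q j <= 0) -> (exists q0, P q0) ->
  0 <= h -> (i < d)%nat -> (forall j, (j < d)%nat -> w j - eps <= v j) ->
  Eh d P f h w i - eps <= Eh d P f h v i.
Proof. intros HQ Hf Hq0 Hh Hi Hvw.
  assert (Eh d P f h w i <= Eh d P f h v i + eps); [|lra].
  apply Eh_le; auto. intros q Hq. pose proof (SS_mono d q (f q) v w eps h i (HQ q Hq) Hvw Hh Hi).
  pose proof (Eh_ge d P f h v i q HQ Hf Hh Hi Hq). lra. Qed.

Lemma Eh_split d P f h k v i : (forall q, P q -> is_Qmatrix d q) ->
  (forall q, P q -> forall j, (j < d)%nat -> f q j <= 0) -> (exists q0, P q0) ->
  0 <= h -> 0 <= k -> (i < d)%nat ->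
  Eh d P f (h + k) v i <= Eh d P f h (Eh d P f k v) i.
Proof. intros HQ Hf Hq0 Hh Hk Hi. apply Eh_le; auto. lra. intros q Hq.
  rewrite SS_semigroup by auto.
  pose proof (SS_mono d q (f q) (Eh d P f k v) (fun j => SS d q (f q) k v j) 0 h i (HQ q Hq)
    ltac:(intros j Hj; pose proof (Eh_ge d P f k v j q HQ Hf Hk Hj Hq); lra) Hh Hi).
  pose proof (Eh_ge d P f h (Eh d P f k v) i q HQ Hf Hh Hi Hq). lra. Qed.

Lemma Eh_0 d P f v i : (forall q, P q -> is_Qmatrix d q) ->
  (forall q, P q -> forall j, (j < d)%nat -> f q j <= 0) -> (exists q0, P q0) ->
  (i < d)%nat -> Eh d P f 0 v i = v i.
Proof. intros HQ Hf [q0 Hq0] Hi. apply Rle_antisym.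
  apply Eh_le; eauto. lra. intros q Hq; rewrite SS_0; lra.
  rewrite <- (SS_0 d q0 (f q0) v i). apply Eh_ge; auto. lra. Qed.

Lemma finite_delta d (Q : nat -> R -> Prop) h :
  (forall i, (i < d)%nat -> exists dl, 0 < dl /\ forall y, Rabs (y - h) < dl -> Q i y) ->
  exists dl, 0 < dl /\ forall i, (i < d)%nat -> forall y, Rabs (y - h) < dl -> Q i y.
Proof. induction d; intros H. exists 1; split; [lra| intros; lia].
  destruct IHd as [d1 [Hd1 H1]]. intros; apply H; lia.
  destruct (H d ltac:(lia)) as [d2 [Hd2 H2]].
  exists (Rmin d1 d2). split. apply Rmin_pos; auto.
  intros i Hi y Hy. pose proof (Rmin_l d1 d2). pose proof (Rmin_r d1 d2).
  destruct (Nat.eq_dec i d). subst. apply H2. lra. apply H1. lia. lra. Qed.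

Lemma Eh_lsc d P f h v eps : (forall q, P q -> is_Qmatrix d q) ->
  (forall q, P q -> forall j, (j < d)%nat -> f q j <= 0) -> (exists q0, P q0) ->
  0 <= h -> 0 < eps ->
  exists dl, 0 < dl /\ forall i, (i < d)%nat -> forall h', Rabs (h' - h) < dl -> 0 <= h' ->
    Eh d P f h v i - eps <= Eh d P f h' v i.
Proof. intros HQ Hf Hq0 Hh He.
  destruct (finite_delta d (fun i h' => 0 <= h' -> Eh d P f h v i - eps <= Eh d P f h' v i) h) as [dl [Hdl H]].
  2: { exists dl; split; auto. }
  intros i Hi.
  destruct (classic (exists q, P q /\ Eh d P f h v i - eps / 2 < SS d q (f q) h v i)) as [[q [Hq Hlt]]|Hn].
  - destruct (SS_cont d q (f q) v h i Hi (eps / 2) ltac:(lra)) as [alp [Halp Hc]].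
    exists alp; split; auto. intros y Hy Hy0.
    pose proof (Eh_ge d P f y v i q HQ Hf Hy0 Hi Hq).
    destruct (Req_dec y h). subst; lra.
    assert (Rabs (SS d q (f q) y v i - SS d q (f q) h v i) < eps / 2).
    { apply (Hc y). split. split. exact I. auto. exact Hy. }
    pose proof (Rle_abs (- (SS d q (f q) y v i - SS d q (f q) h v i))). rewrite Rabs_Ropp in *. lra.
  - exfalso. assert (Eh d P f h v i <= Eh d P f h v i - eps / 2); [|lra].
    apply Eh_le; auto. intros q Hq. apply Rnot_lt_le. intros Hlt. apply Hn. eauto. Qed.

Lemma sorted_lt a l x : StronglySorted Rlt (a :: l) -> In x l -> a < x.
Proof. intros H Hx. apply StronglySorted_inv in H as [_ H]. rewrite Forall_forall in H. auto. Qed.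

Lemma sorted_tail a l : StronglySorted Rlt (a :: l) -> StronglySorted Rlt l.
Proof. intros H. apply StronglySorted_inv in H; tauto. Qed.

Lemma last_ge a l x : StronglySorted Rlt (a :: l) -> In x (a :: l) -> x <= last (a :: l) 0.
Proof. revert a x. induction l as [|b l IH]; intros a x Hs Hx.
  - destruct Hx as [->|[]]. simpl; lra.
  - change (last (a :: b :: l) 0) with (last (b :: l) 0).
    destruct Hx as [->|Hx].
    + pose proof (sorted_lt _ _ b Hs (or_introl eq_refl)). pose proof (IH b b (sorted_tail _ _ Hs) (or_introl eq_refl)). lra.
    + apply IH; auto. apply (sorted_tail _ _ Hs). Qed.

Lemma hd_le a l x : StronglySorted Rlt (a :: l) -> In x (a :: l) -> a <= x.
Proof. intros Hs [->|Hx]. lra. pose proof (sorted_lt _ _ _ Hs Hx). lra. Qed.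

Section S.
End S.

Lemma Epi_aux_mono d P f (HQ : forall q, P q -> is_Qmatrix d q)
  (Hf : forall q, P q -> forall j, (j < d)%nat -> f q j <= 0) (Hq0 : exists q0, P q0) :
  forall rest prev v w eps, StronglySorted Rlt (prev :: rest) -> (forall j, (j < d)%nat -> w j - eps <= v j) ->
  forall i, (i < d)%nat -> Epi_aux d P f prev rest w i - eps <= Epi_aux d P f prev rest v i.
Proof. induction rest as [|a rest IH]; intros prev v w eps Hs Hvw i Hi; simpl; auto.
  apply Eh_mono; auto. pose proof (sorted_lt _ _ a Hs (or_introl eq_refl)). lra.
  intros j Hj. apply IH; auto. apply (sorted_tail _ _ Hs). Qed.

Lemma Epi_aux_bound d P f (HQ : forall q, P q -> is_Qmatrix d q)
  (Hf : forall q, P q -> forall j, (j < d)%nat -> f q j <= 0) (Hq0 : exists q0, P q0) :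
  forall rest prev v m, StronglySorted Rlt (prev :: rest) -> (forall j, (j < d)%nat -> v j <= m) ->
  forall i, (i < d)%nat -> Epi_aux d P f prev rest v i <= m.
Proof. induction rest as [|a rest IH]; intros prev v m Hs Hv i Hi; simpl; auto.
  apply Eh_bound; auto. pose proof (sorted_lt _ _ a Hs (or_introl eq_refl)). lra.
  intros j Hj. apply IH; auto. apply (sorted_tail _ _ Hs). Qed.

Lemma Epi_aux_refine d P f (HQ : forall q, P q -> is_Qmatrix d q)
  (Hf : forall q, P q -> forall j, (j < d)%nat -> f q j <= 0) (Hq0 : exists q0, P q0) u T :
  forall rest' prev rest, StronglySorted Rlt (prev :: rest) -> StronglySorted Rlt (prev :: rest') ->
  (forall x, In x rest -> In x rest') -> last (prev :: rest) 0 = T -> (forall y, In y rest' -> y <= T) ->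
  forall i, (i < d)%nat -> Epi_aux d P f prev rest u i <= Epi_aux d P f prev rest' u i.
Proof. induction rest' as [|y r' IH]; intros prev rest Hs Hs' Hsub Hlast Hle i Hi.
  - destruct rest as [|x r]. lra. exfalso. apply (Hsub x). left; auto.
  - destruct rest as [|x r].
    + exfalso. simpl in Hlast. pose proof (Hle y (or_introl eq_refl)).
      pose proof (sorted_lt _ _ y Hs' (or_introl eq_refl)). lra.
    + assert (Hpy : prev < y) by (apply (sorted_lt _ _ y Hs'); left; auto).
      assert (Hpx : prev < x) by (apply (sorted_lt _ _ x Hs); left; auto).
      assert (Hrs : forall z, In z r -> x < z) by (intros; apply (sorted_lt x r); auto; apply (sorted_tail _ _ Hs)).
      assert (Hr's : forall z, In z r' -> y < z) by (intros; apply (sorted_lt y r'); auto; apply (sorted_tail _ _ Hs')).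
      simpl. destruct (Hsub x (or_introl eq_refl)) as [Hxy|Hxr'].
      * subst y. enough (forall j, (j < d)%nat -> Epi_aux d P f x r u j - 0 <= Epi_aux d P f x r' u j).
        pose proof (Eh_mono d P f (x - prev) (Epi_aux d P f x r' u) (Epi_aux d P f x r u) 0 i HQ Hf Hq0 ltac:(lra) Hi H). lra.
        intros j Hj. assert (Epi_aux d P f x r u j <= Epi_aux d P f x r' u j); [|lra].
        apply IH; auto. apply (sorted_tail _ _ Hs). apply (sorted_tail _ _ Hs').
        intros z Hz. destruct (Hsub z (or_intror Hz)) as [Heq|]; auto. pose proof (Hrs z Hz); lra.
        intros z Hz; apply Hle; right; auto.
      * assert (Hyx : y < x) by auto.
        replace (x - prev) with ((y - prev) + (x - y)) by ring.
        eapply Rle_trans. apply Eh_split; auto; lra.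
        enough (forall j, (j < d)%nat -> Eh d P f (x - y) (Epi_aux d P f x r u) j - 0 <= Epi_aux d P f y r' u j).
        pose proof (Eh_mono d P f (y - prev) (Epi_aux d P f y r' u) (Eh d P f (x - y) (Epi_aux d P f x r u)) 0 i HQ Hf Hq0 ltac:(lra) Hi H). lra.
        intros j Hj. assert (Epi_aux d P f y (x :: r) u j <= Epi_aux d P f y r' u j); [|simpl in *; lra].
        apply IH; auto.
        -- constructor. apply (sorted_tail _ _ Hs). constructor. auto. rewrite Forall_forall. intros z Hz. pose proof (Hrs z Hz); lra.
        -- apply (sorted_tail _ _ Hs').
        -- intros z [<-|Hz]; auto. destruct (Hsub z (or_intror Hz)) as [Heq|]; auto. pose proof (Hrs z Hz); lra.
        -- intros z Hz; apply Hle; right; auto.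
Qed.

Lemma Epi_eq d P f (HQ : forall q, P q -> is_Qmatrix d q)
  (Hf : forall q, P q -> forall j, (j < d)%nat -> f q j <= 0) (Hq0 : exists q0, P q0) a rest u i :
  (i < d)%nat -> Epi d P f (a :: rest) u i = Epi_aux d P f a rest u i.
Proof. intros Hi. destruct rest; simpl. apply Eh_0; auto. reflexivity. Qed.

Lemma approx_aux d P f (HQ : forall q, P q -> is_Qmatrix d q)
  (Hf : forall q, P q -> forall j, (j < d)%nat -> f q j <= 0) (Hq0 : exists q0, P q0) u :
  forall rest prev eps, StronglySorted Rlt (prev :: rest) -> 0 <= prev -> 0 < eps ->
  exists dl, 0 < dl /\ forall prev' g, StronglySorted Rlt (prev' :: map g rest) ->
    Rabs (prev' - prev) < dl -> (forall p, In p rest -> Rabs (g p - p) < dl) ->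
    forall i, (i < d)%nat -> Epi_aux d P f prev rest u i - eps <= Epi_aux d P f prev' (map g rest) u i.
Proof. induction rest as [|a rest IH]; intros prev eps Hs Hp He.
  - exists 1. split. lra. intros. simpl. lra.
  - assert (Hpa : prev < a) by (apply (sorted_lt _ _ a Hs); left; auto).
    destruct (IH a (eps / 2) (sorted_tail _ _ Hs) ltac:(lra) ltac:(lra)) as [d1 [Hd1 H1]].
    destruct (Eh_lsc d P f (a - prev) (Epi_aux d P f a rest u) (eps / 2) HQ Hf Hq0 ltac:(lra) ltac:(lra)) as [d2 [Hd2 H2]].
    exists (Rmin d1 (d2 / 2)). split. apply Rmin_pos; lra.
    intros prev' g Hs' Hpp Hg i Hi. pose proof (Rmin_l d1 (d2 / 2)). pose proof (Rmin_r d1 (d2 / 2)).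
    simpl. simpl in Hs'.
    assert (Hga : prev' < g a) by (apply (sorted_lt _ _ (g a) Hs'); left; auto).
    assert (HW : forall j, (j < d)%nat -> Epi_aux d P f a rest u j - eps / 2 <= Epi_aux d P f (g a) (map g rest) u j).
    { intros j Hj. apply H1; auto. apply (sorted_tail _ _ Hs').
      pose proof (Hg a (or_introl eq_refl)). lra.
      intros p Hp'. pose proof (Hg p (or_intror Hp')). lra. }
    pose proof (Eh_mono d P f (g a - prev') (Epi_aux d P f (g a) (map g rest) u) (Epi_aux d P f a rest u) (eps / 2) i HQ Hf Hq0 ltac:(lra) Hi HW).
    assert (Hab : Rabs (g a - prev' - (a - prev)) < d2).
    { pose proof (Rabs_def2 _ _ (Hg a (or_introl eq_refl))). pose proof (Rabs_def2 _ _ Hpp).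
      apply Rabs_def1; lra. }
    pose proof (H2 i Hi (g a - prev') Hab ltac:(lra)). lra.
Qed.

Fixpoint chooseA (p a : R) (l : list R) : R :=
  match l with [] => a | x :: r => if Rle_dec x p then chooseA p x r else a end.

Lemma CH1 p r : forall a, In (chooseA p a r) (a :: r).
Proof. induction r as [|x r IH]; intros a; simpl. auto.
  destruct (Rle_dec x p). right; apply IH. left; auto. Qed.

Lemma CH2 p r : forall a, a <= p -> chooseA p a r <= p.
Proof. induction r as [|x r IH]; intros a Ha; simpl. auto.
  destruct (Rle_dec x p). apply IH; auto. auto. Qed.

Lemma CH3 p dl r : forall a, a <= p -> p <= last (a :: r) 0 -> mesh_aux a r < dl -> p - chooseA p a r < dl.
Proof. induction r as [|x r IH]; intros a Ha Hl Hm; simpl in *. lra.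
  pose proof (Rmax_l (x - a) (mesh_aux x r)). pose proof (Rmax_r (x - a) (mesh_aux x r)).
  destruct (Rle_dec x p). apply IH; auto. lra. lra. Qed.

Lemma CH4 p r : forall a, StronglySorted Rlt (a :: r) -> In p (a :: r) -> chooseA p a r = p.
Proof. induction r as [|x r IH]; intros a Hs Hp; simpl.
  destruct Hp as [->|[]]; auto.
  destruct Hp as [<-|Hp].
  - pose proof (sorted_lt _ _ x Hs (or_introl eq_refl)). destruct (Rle_dec x a); auto. lra.
  - pose proof (hd_le _ _ _ (sorted_tail _ _ Hs) Hp). destruct (Rle_dec x p); [|lra].
    apply IH; auto. apply (sorted_tail _ _ Hs). Qed.

Fixpoint mingap (l : list R) : R :=
  match l with
  | x :: ((y :: _) as r) => Rmin (y - x) (mingap r)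
  | _ => 1
  end.

Lemma MG1 l : StronglySorted Rlt l -> 0 < mingap l.
Proof. induction l as [|x r IH]; intros Hs; simpl. lra.
  destruct r as [|y r']. lra. apply Rmin_pos.
  pose proof (sorted_lt _ _ y Hs (or_introl eq_refl)); lra. apply IH, (sorted_tail _ _ Hs). Qed.

Lemma MG2 l : StronglySorted Rlt l -> forall a b, In a l -> In b l -> a < b -> mingap l <= b - a.
Proof. induction l as [|x r IH]; intros Hs a b Ha Hb Hab. destruct Ha.
  destruct r as [|y r'].
  - destruct Ha as [<-|[]]. destruct Hb as [<-|[]]. lra.
  - change (mingap (x :: y :: r')) with (Rmin (y - x) (mingap (y :: r'))).
    pose proof (Rmin_l (y - x) (mingap (y :: r'))). pose proof (Rmin_r (y - x) (mingap (y :: r'))).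
    destruct Ha as [<-|Ha].
    + destruct Hb as [<-|Hb]. lra. pose proof (hd_le _ _ _ (sorted_tail _ _ Hs) Hb). lra.
    + destruct Hb as [<-|Hb]. pose proof (sorted_lt _ _ _ Hs Ha). lra.
      pose proof (IH (sorted_tail _ _ Hs) a b Ha Hb Hab). lra. Qed.

Lemma map_sorted (g : R -> R) l : StronglySorted Rlt l ->
  (forall a b, In a l -> In b l -> a < b -> g a < g b) -> StronglySorted Rlt (map g l).
Proof. induction l as [|x r IH]; intros Hs Hg; simpl. constructor.
  constructor. apply IH. apply (sorted_tail _ _ Hs). intros; apply Hg; auto; right; auto.
  rewrite Forall_forall. intros z Hz. apply in_map_iff in Hz as [p [<- Hp]].
  apply Hg. left; auto. right; auto. apply (sorted_lt _ _ _ Hs Hp). Qed.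

Lemma last_map (g : R -> R) l : forall a, last (map g (a :: l)) 0 = g (last (a :: l) 0).
Proof. induction l as [|b l IH]; intros a. reflexivity.
  change (last (g a :: map g (b :: l)) 0 = g (last (b :: l) 0)).
  rewrite <- IH. simpl. reflexivity. Qed.

Lemma last_in a l : In (last (a :: l) 0) (a :: l).
Proof. revert a. induction l as [|b l IH]; intros a. left; auto.
  change (In (last (b :: l) 0) (a :: b :: l)). right. apply IH. Qed.

Lemma part_decomp t l : is_partition_t t l -> exists rest, l = 0 :: rest /\ StronglySorted Rlt (0 :: rest) /\ last (0 :: rest) 0 = t.
Proof. intros [[Hh Hs] Hl]. destruct l as [|a rest]. simpl in Hh. lra.
  simpl in Hh. subst a. exists rest. auto. Qed.

Lemma approx_part d P f (HQ : forall q, P q -> is_Qmatrix d q)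
  (Hf : forall q, P q -> forall j, (j < d)%nat -> f q j <= 0) (Hq0 : exists q0, P q0) u t l eps :
  is_partition_t t l -> 0 < eps ->
  exists dl, 0 < dl /\ forall sg, is_partition_t t sg -> mesh sg < dl ->
    forall i, (i < d)%nat -> Epi d P f l u i - eps <= Epi d P f sg u i.
Proof. intros Hl He. destruct (part_decomp t l Hl) as [restl [-> [Hsl Hll]]].
  destruct (approx_aux d P f HQ Hf Hq0 u restl 0 eps Hsl ltac:(lra) He) as [d1 [Hd1 H1]].
  pose proof (MG1 _ Hsl) as Hmg.
  exists (Rmin d1 (mingap (0 :: restl))). split. apply Rmin_pos; lra.
  intros sg Hsg Hmesh i Hi.
  pose proof (Rmin_l d1 (mingap (0 :: restl))). pose proof (Rmin_r d1 (mingap (0 :: restl))).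
  destruct (part_decomp t sg Hsg) as [rests [-> [Hss Hls]]].
  set (g := fun p => chooseA p 0 rests).
  assert (Hp : forall p, In p (0 :: restl) -> g p <= p /\ p - g p < Rmin d1 (mingap (0 :: restl)) /\ In (g p) (0 :: rests)).
  { intros p Hp. pose proof (hd_le _ _ _ Hsl Hp). pose proof (last_ge _ _ _ Hsl Hp).
    unfold g. split. apply CH2; auto. split. apply (CH3 p _ rests 0). lra. rewrite Hls, <- Hll; auto. exact Hmesh. apply CH1. }
  assert (Hg0 : g 0 = 0) by (apply CH4; auto; left; auto).
  assert (Hsort : StronglySorted Rlt (0 :: map g restl)).
  { replace (0 :: map g restl) with (map g (0 :: restl)) by (simpl; rewrite Hg0; auto).
    apply map_sorted; auto. intros a b Ha Hb Hab.
    pose proof (MG2 _ Hsl a b Ha Hb Hab). destruct (Hp a Ha) as [Ha1 _]. destruct (Hp b Hb) as [_ [Hb2 _]]. lra. }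
  rewrite !Epi_eq by auto.
  pose proof (H1 0 g Hsort ltac:(rewrite Rminus_0_r, Rabs_R0; lra)
    ltac:(intros p Hp'; destruct (Hp p (or_intror Hp')) as [Ha1 [Ha2 _]]; apply Rabs_def1; lra) i Hi).
  assert (Epi_aux d P f 0 (map g restl) u i <= Epi_aux d P f 0 rests u i); [|lra].
  apply (Epi_aux_refine d P f HQ Hf Hq0 u t); auto.
  - intros z Hz. apply in_map_iff in Hz as [p [<- Hp']]. destruct (Hp p (or_intror Hp')) as [_ [_ Hin]].
    destruct Hin as [Heq|Hin]; auto. exfalso.
    pose proof (sorted_lt _ _ (g p) Hsort (in_map g _ _ Hp')). lra.
  - replace (0 :: map g restl) with (map g (0 :: restl)) by (simpl; rewrite Hg0; auto).
    rewrite last_map, Hll. unfold g. apply CH4; auto. rewrite <- Hls. apply last_in.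
  - intros y Hy. rewrite <- Hls. apply last_ge; auto. right; auto.
Qed.

Theorem mainTheorem5 (d : nat) (P : mat -> Prop) (f : mat -> vec)
  (HQ : forall q, P q -> is_Qmatrix d q)
  (Hf0 : exists q0, P q0 /\ forall i, (i < d)%nat -> f q0 i = 0)
  (Hfle : forall q, P q -> forall i, (i < d)%nat -> f q i <= 0)
  (Hfin : forall u : vec, forall i, (i < d)%nat ->
     exists M, forall q, P q -> mv d q u i + f q i <= M)
  (t : R) (Ht : 0 <= t) (pi : nat -> list R)
  (Hpi : forall n, is_partition_t t (pi n))
  (Hnest : forall n x, In x (pi n) -> In x (pi (S n)))
  (Hmesh_dec : Un_decreasing (fun n => mesh (pi n)))
  (Hmesh_cv : Un_cv (fun n => mesh (pi n)) 0) :
  forall u0 : vec, forall i, (i < d)%nat ->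
    Un_growing (fun n => Epi d P f (pi n) u0 i) /\
    Un_cv (fun n => Epi d P f (pi n) u0 i) (Nisio d P f t u0 i).
Proof.
  intros u0 i Hi.
  assert (Hq0 : exists q0, P q0) by (destruct Hf0 as [q0 [H _]]; eauto).
  assert (Hgrow : forall n j, (j < d)%nat -> Epi d P f (pi n) u0 j <= Epi d P f (pi (S n)) u0 j).
  { intros n j Hj. destruct (part_decomp t _ (Hpi n)) as [r1 [E1 [S1 L1]]].
    destruct (part_decomp t _ (Hpi (S n))) as [r2 [E2 [S2 L2]]].
    rewrite E1, E2, !Epi_eq by auto.
    apply (Epi_aux_refine d P f HQ Hfle Hq0 u0 t); auto.
    - intros x Hx. pose proof (Hnest n x). rewrite E1, E2 in H. destruct (H (or_intror Hx)) as [<-|]; auto.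
      pose proof (sorted_lt _ _ _ S1 Hx). lra.
    - intros y Hy. rewrite <- L2. apply last_ge; auto. right; auto. }
  destruct (ex_vbound d u0) as [m Hm].
  assert (Hbd : forall l, is_partition_t t l -> Epi d P f l u0 i <= m).
  { intros l Hl. destruct (part_decomp t l Hl) as [r [-> [S1 _]]]. rewrite Epi_eq by auto.
    apply (Epi_aux_bound d P f HQ Hfle Hq0); auto. }
  assert (Hlub : is_lub (fun x => exists a, is_partition_t t a /\ x = Epi d P f a u0 i) (Nisio d P f t u0 i)).
  { unfold Nisio, vsup. apply Rsup_lub. exists (Epi d P f (pi 0%nat) u0 i). eauto.
    exists m. intros x [a [Ha ->]]. apply Hbd; auto. }
  split. intros n. apply Hgrow; auto.
  intros eps He.
  set (L := Nisio d P f t u0 i) in *.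
  destruct (classic (exists l, is_partition_t t l /\ L - eps / 2 < Epi d P f l u0 i)) as [[l [Hl Hlt]]|Hn].
  2: { exfalso. assert (L <= L - eps / 2); [|lra]. apply Hlub. intros x [a [Ha ->]].
       apply Rnot_lt_le. intros Hc. apply Hn. eauto. }
  destruct (approx_part d P f HQ Hfle Hq0 u0 t l (eps / 2) Hl ltac:(lra)) as [dl [Hdl Happ]].
  destruct (Hmesh_cv dl Hdl) as [N HN].
  exists N. intros n Hn. unfold R_dist.
  assert (HuN : Epi d P f l u0 i - eps / 2 <= Epi d P f (pi N) u0 i).
  { apply Happ; auto. pose proof (HN N ltac:(lia)). unfold R_dist in H.
    rewrite Rminus_0_r in H. pose proof (Rle_abs (mesh (pi N))). lra. }
  assert (Hmon : Epi d P f (pi N) u0 i <= Epi d P f (pi n) u0 i).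
  { induction Hn. lra. pose proof (Hgrow m0 i Hi). lra. }
  assert (Hup : Epi d P f (pi n) u0 i <= L) by (apply Hlub; eauto).
  apply Rabs_def1; lra.
Qed.
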